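(* Let $\mathcal{H}$ be a real Hilbert space, let $A\colon \mathcal{H}\rightrightarrows\mathcal{H}$ be maximally monotone, let $B\colon \mathcal{H}\to\mathcal{H}$ be monotone and $L_1$-Lipschitz, and let $C\colon \mathcal{H}\to\mathcal{H}$ be $1/L_2$-cocoercive. Let $x\in(A+B+C)^{-1}(0)$, let $\lambda \in \left(0,\frac{2}{4L_1+L_2} \right)$, and given $x_0,x_{-1}\in\mathcal{H}$ let $$x_{k+1} = J_{\lambda A}\bigl(x_k - 2\lambda B(x_k) + \lambda B(x_{k-1}) - \lambda C(x_k) \bigr) \quad\forall k\in\mathbb{N}.$$ Then there exists $\varepsilon>0$ such that, for all $k\in\mathbb{N}$, $$\|x_{k+1}-x\|^2 + 2\lambda\langle B(x_{k+1})-B(x_k),x-x_{k+1}\rangle + \left(\lambda L_1+\varepsilon \right)\|x_{k+1}-x_k\|^2 \leq \|x_k-x\|^2 + 2\lambda\langle B(x_k)-B(x_{k-1}),x-x_{k}\rangle + \lambda L_1\|x_k-x_{k-1}\|^2.$$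
   Context: $J_{\lambda A}:=(I+\lambda A)^{-1}$ is the resolvent. $C$ is $1/L_2$-cocoercive if $\langle x-y,C(x)-C(y)\rangle\geq\frac{1}{L_2}\|C(x)-C(y)\|^2$ for all $x,y$. *)

(* Defs.v *)
From HB Require Import structures.
From mathcomp Require Import all_boot all_order all_algebra.
From mathcomp Require Import all_classical all_reals all_analysis.
Set Implicit Arguments. Unset Strict Implicit. Unset Printing Implicit Defensive.
Import Order.TTheory GRing.Theory Num.Theory.
Import numFieldNormedType.Exports.
Local Open Scope classical_set_scope.
Local Open Scope ring_scope.

Definition is_inner_product (R : realType) (V : completeNormedModType R)
  (ip : V -> V -> R) : Prop :=
  [/\ (forall x y, ip x y = ip y x),
      (forall a x y z, ip (a *: x + y) z = a * ip x z + ip y z),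
      (forall x, 0 <= ip x x),
      (forall x, ip x x = 0 -> x = 0)
    & (forall x, `|x| ^+ 2 = ip x x)].

Definition monotone_op (R : realType) (V : completeNormedModType R)
  (ip : V -> V -> R) (A : V -> set V) : Prop :=
  forall x y u v, A x u -> A y v -> 0 <= ip (x - y) (u - v).

Definition maximally_monotone (R : realType) (V : completeNormedModType R)
  (ip : V -> V -> R) (A : V -> set V) : Prop :=
  monotone_op ip A /\
  forall A' : V -> set V, monotone_op ip A' ->
    (forall x u, A x u -> A' x u) -> forall x u, A' x u -> A x u.

Definition monotone_fun (R : realType) (V : completeNormedModType R)
  (ip : V -> V -> R) (B : V -> V) : Prop :=
  forall x y, 0 <= ip (x - y) (B x - B y).

Definition lipschitz_with (R : realType) (V : completeNormedModType R)
  (L : R) (B : V -> V) : Prop :=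
  forall x y, `|B x - B y| <= L * `|x - y|.

Definition cocoercive_with (R : realType) (V : completeNormedModType R)
  (ip : V -> V -> R) (L : R) (C : V -> V) : Prop :=
  forall x y, ip (x - y) (C x - C y) >= L^-1 * `|C x - C y| ^+ 2.

(* p = J_{lam A}(z) = (I + lam A)^{-1}(z), i.e. z ∈ p + lam A(p). *)
Definition resolvent_rel (R : realType) (V : completeNormedModType R)
  (lam : R) (A : V -> set V) (z p : V) : Prop :=
  exists a, A p a /\ z = p + lam *: a.

(* Main.v *)
Require Import Defs.
From HB Require Import structures.
From mathcomp Require Import all_boot all_order all_algebra.
From mathcomp Require Import all_classical all_reals all_analysis.
From mathcomp Require Import lra.
Import Order.TTheory GRing.Theory Num.Theory.
Import numFieldNormedType.Exports.
Local Open Scope classical_set_scope.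
Local Open Scope ring_scope.

Set Implicit Arguments.
Section IP.
Variables (R : realType) (V : completeNormedModType R) (ip : V -> V -> R).
Hypothesis H : is_inner_product ip.

Lemma ipC x y : ip x y = ip y x.
Proof. by case: H. Qed.
Lemma ip_lin a x y z : ip (a *: x + y) z = a * ip x z + ip y z.
Proof. by case: H. Qed.
Lemma ip0l z : ip 0 z = 0.
Proof.
have := ip_lin 1 0 0 z; rewrite scaler0 addr0 mul1r => h.
lra.
Qed.
Lemma ipDl x y z : ip (x + y) z = ip x z + ip y z.
Proof. by rewrite -[x]scale1r ip_lin mul1r scale1r. Qed.
Lemma ipZl a x z : ip (a *: x) z = a * ip x z.
Proof. by rewrite -[a *: x]addr0 ip_lin ip0l addr0. Qed.
Lemma ipNl x z : ip (- x) z = - ip x z.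
Proof. by rewrite -scaleN1r ipZl mulN1r. Qed.
Lemma ipBl x y z : ip (x - y) z = ip x z - ip y z.
Proof. by rewrite ipDl ipNl. Qed.
Lemma ipDr x y z : ip z (x + y) = ip z x + ip z y.
Proof. by rewrite ipC ipDl !(ipC z). Qed.
Lemma ipZr a x z : ip z (a *: x) = a * ip z x.
Proof. by rewrite ipC ipZl ipC. Qed.
Lemma ipNr x z : ip z (- x) = - ip z x.
Proof. by rewrite ipC ipNl ipC. Qed.
Lemma ipBr x y z : ip z (x - y) = ip z x - ip z y.
Proof. by rewrite ipDr ipNr. Qed.
Lemma ipn x : `|x| ^+ 2 = ip x x.
Proof. by case: H. Qed.
Lemma ipge0 x : 0 <= ip x x.
Proof. by case: H. Qed.
Lemma young t d u : - (2 * t * ip d u) <= t ^+ 2 * `|d| ^+ 2 + `|u| ^+ 2.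
Proof.
have := ipge0 (t *: d + u).
rewrite !ipDl !ipDr !ipZl !ipZr !ipn (ipC u d); lra.
Qed.
End IP.

Theorem lemma5p1 (R : realType) (V : completeNormedModType R)
  (ip : V -> V -> R) (A : V -> set V) (B C : V -> V) (L1 L2 lam : R)
  (x : V) (xs : nat -> V) :
  is_inner_product ip ->
  maximally_monotone ip A ->
  0 <= L1 -> monotone_fun ip B -> lipschitz_with L1 B ->
  0 < L2 -> cocoercive_with ip L2 C ->
  (exists a, A x a /\ a + B x + C x = 0) ->
  0 < lam -> lam < 2 / (4 * L1 + L2) ->
  (forall k : nat,
     resolvent_rel lam A
       (xs k.+1 - 2 * lam *: B (xs k.+1) + lam *: B (xs k) - lam *: C (xs k.+1))
       (xs k.+2)) ->
  exists eps : R, 0 < eps /\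
    forall k : nat,
      `|xs k.+2 - x| ^+ 2 + 2 * lam * ip (B (xs k.+2) - B (xs k.+1)) (x - xs k.+2)
        + (lam * L1 + eps) * `|xs k.+2 - xs k.+1| ^+ 2
      <= `|xs k.+1 - x| ^+ 2 + 2 * lam * ip (B (xs k.+1) - B (xs k)) (x - xs k.+1)
        + lam * L1 * `|xs k.+1 - xs k| ^+ 2.
Proof.
move=> Hip [monA _] L1ge0 monB lipB L2gt0 cocC [a [Axa eqa]] lamgt0 lamlt Hres.
have den : 0 < 4 * L1 + L2 by lra.
have lamden : lam * (4 * L1 + L2) < 2.
  by move: lamlt; rewrite ltr_pdivlMr.
exists (1 - lam * (4 * L1 + L2) / 2); split; first lra.
move=> k.
have [ak [Aak eqk]] := Hres k.
move: Aak eqk; set p := xs k.+2; set q := xs k.+1; set r := xs k => Aak eqk.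
have ip0r v : ip v 0 = 0 by rewrite (ipC Hip) (ip0l Hip).
have hA := monA _ _ _ _ Aak Axa.
have hA' : 0 <= lam * ip (p - x) (ak - a) by rewrite mulr_ge0 // ltW.
have ea v : ip v a = - ip v (B x) - ip v (C x).
  have := congr1 (ip v) eqa; rewrite ip0r !(ipDr Hip); lra.
have ek v : ip v (q - 2 * lam *: B q + lam *: B r - lam *: C q) = ip v (p + lam *: ak).
  by rewrite eqk.
have ekp := ek p; have ekx := ek x.
rewrite !(ipDl Hip, ipBl Hip, ipNl Hip, ipZl Hip, ipDr Hip, ipBr Hip, ipNr Hip, ipZr Hip) in hA' ekp ekx.
rewrite !ea in hA'.
have f1 : `|q - x| ^+ 2 = `|p - x| ^+ 2 - 2 * ip (p - x) (p - q) + `|p - q| ^+ 2.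
  rewrite !(ipn Hip) !(ipBl Hip, ipBr Hip) (ipC Hip q p) (ipC Hip x p) (ipC Hip x q); lra.
rewrite !(ipBl Hip, ipBr Hip) in f1.
have f2 : 0 <= ip (p - x) (B p - B x) by exact: monB.
rewrite !(ipBl Hip, ipBr Hip) in f2.
have f5 : - ip (p - q) (B q - B r) <= L1 / 2 * (`|p - q| ^+ 2 + `|q - r| ^+ 2).
  have hu : `|B q - B r| <= L1 * `|q - r| := lipB q r.
  have hu2 : `|B q - B r| ^+ 2 <= L1 ^+ 2 * `|q - r| ^+ 2.
    have n1 := normr_ge0 (B q - B r); have n2 := normr_ge0 (q - r); nra.
  have y := young Hip L1 (p - q) (B q - B r).
  have [L10|L1gt0] := eqVneq L1 0.
    have : `|B q - B r| = 0.
      apply/eqP; rewrite eq_le normr_ge0 andbT; move: hu; rewrite L10 mul0r //.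
    move/normr0_eq0 => ->; rewrite ip0r; rewrite L10; lra.
  have L1p : 0 < L1 by rewrite lt_def L1gt0.
  nra.
rewrite !(ipBl Hip, ipBr Hip) in f5.
have f7 : L2^-1 * `|C q - C x| ^+ 2 <= ip (q - x) (C q - C x) := cocC q x.
rewrite !(ipBl Hip, ipBr Hip) in f7.
have f8 : - ip (p - q) (C q - C x) <= L2 / 4 * `|p - q| ^+ 2 + L2^-1 * `|C q - C x| ^+ 2.
  have y := young Hip (L2 / 2) (p - q) (C q - C x).
  rewrite -(ler_pM2l L2gt0) mulrDr [L2 * (L2^-1 * _)]mulrA mulfV ?gt_eqF // mul1r.
  lra.
rewrite !(ipBl Hip, ipBr Hip) in f8.
rewrite (ipC Hip (B p - B q)) (ipC Hip (B q - B r)) !(ipBl Hip, ipBr Hip).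
move: f1 f2 f5 f7 f8 hA' ekp ekx.
set N := `|p - q| ^+ 2; set G := `|q - r| ^+ 2; set W := L2^-1 * _.
move=> f1 f2 f5 f7 f8 hA' ekp ekx.
have f2l := mulr_ge0 (ltW lamgt0) f2.
have f5l := ler_wpM2l (ltW lamgt0) f5.
have f7l := ler_wpM2l (ltW lamgt0) f7.
have f8l := ler_wpM2l (ltW lamgt0) f8.
lra.
Qed.
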